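(* Let $F=\begin{pmatrix}1&0&-1\\0&0&0\\-1&0&1\end{pmatrix}$ (edge detect A filter). Then the equation $F*X=B$ with the zero boundary condition, for unknown $X\in\mathbb{R}^{m\times n}$, has a unique solution for every $B\in\mathbb{R}^{m\times n}$ if and only if $m,n\notin\{2l-1: l\in\mathbb{N}\}$.
   Context: $\mathbb{N}=\{1,2,3,\dots\}$. For $F=[f_{ij}]\in\mathbb{R}^{3\times3}$ and $X=[x_{ij}]\in\mathbb{R}^{m\times n}$, the convolution $F*X\in\mathbb{R}^{m\times n}$ is defined by $[F*X]_{ij}=\sum_{l_1=1}^3\sum_{l_2=1}^3 f_{l_1l_2}\,x_{i-l_1+2,\,j-l_2+2}$ for $1\le i\le m$, $1\le j\le n$, where under the zero boundary condition all values $x_{ij}$ with $i\in\{0,m+1\}$ or $j\in\{0,n+1\}$ are $0$. *)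

(* Defs.v *)
From HB Require Import structures.
From mathcomp Require Import all_boot all_order all_algebra.
Set Implicit Arguments. Unset Strict Implicit. Unset Printing Implicit Defensive.
Import Order.TTheory GRing.Theory Num.Theory.
Local Open Scope ring_scope.

(* Indices are 0-based ('I_m), paper's indices are 1-based.
   zero-boundary extension: entry (a, b) of X for integer (0-based) indices,
   0 when outside 0 <= a < m, 0 <= b < n. *)
Definition zext (R : ringType) (m n : nat) (X : 'M[R]_(m, n)) (a b : int) : R :=
  match a, b with
  | Posz a', Posz b' =>
      (if insub a' : option 'I_m is Some i then
         if insub b' : option 'I_n is Some j then X i j else 0
       else 0)
  | _, _ => 0
  end.

(* [F*X]_{ij} = sum_{l1,l2} f_{l1 l2} x_{i-l1+2, j-l2+2} (1-based), i.e.
   with 0-based i, j, l1, l2: x_{i-l1+1, j-l2+1}. *)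
Definition conv3 (R : ringType) (m n : nat) (F : 'M[R]_3) (X : 'M[R]_(m, n))
  : 'M[R]_(m, n) :=
  \matrix_(i < m, j < n)
    \sum_(l1 < 3) \sum_(l2 < 3)
      F l1 l2 * zext X (i%:Z - l1%:Z + 1) (j%:Z - l2%:Z + 1).

Definition edgeA (R : ringType) : 'M[R]_3 :=
  \matrix_(i < 3, j < 3)
    (if (i == 0%N :> nat) && (j == 0%N :> nat) then 1
     else if (i == 0%N :> nat) && (j == 2%N :> nat) then -1
     else if (i == 2%N :> nat) && (j == 0%N :> nat) then -1
     else if (i == 2%N :> nat) && (j == 2%N :> nat) then 1
     else 0).

(* Main.v *)
Require Import Defs.
From HB Require Import structures.
From mathcomp Require Import all_boot all_order all_algebra.
From mathcomp Require Import reals.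
From mathcomp Require Import zify ring.
Import Order.TTheory GRing.Theory Num.Theory.
Set Implicit Arguments. Unset Strict Implicit. Unset Printing Implicit Defensive.
Local Open Scope ring_scope.

Definition ext1 (R : ringType) k (f : 'I_k -> R) (a : int) : R :=
  match a with Posz a' => if insub a' : option 'I_k is Some i then f i else 0 | _ => 0 end.

Lemma zextE (R : ringType) m n (X : 'M[R]_(m, n)) a b :
  zext X a b = ext1 (fun i => ext1 (fun j => X i j) b) a.
Proof. by case: a b => [a|a] [b|b] //=; case: (insub a). Qed.

Lemma ext1B (R : ringType) k (f g : 'I_k -> R) c :
  ext1 (fun a => f a - g a) c = ext1 f c - ext1 g c.
Proof. by case: c => [c|c] /=; rewrite ?subr0 //; case: (insub c); rewrite ?subr0. Qed.

Lemma ext1_in (R : ringType) k (f : 'I_k -> R) (i : 'I_k) : ext1 f (Posz i) = f i.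
Proof. by rewrite /= valK. Qed.

Lemma ext1_out (R : ringType) k (f : 'I_k -> R) (c : nat) : (k <= c)%N -> ext1 f (Posz c) = 0.
Proof. by move=> H; rewrite /= insubN // -leqNgt. Qed.

Lemma sum_delta (R : ringType) k (f : 'I_k -> R) (c : nat) :
  \sum_(a < k) ((a == c :> nat)%:R * f a) = ext1 f (Posz c).
Proof.
rewrite /ext1; case: insubP => [a0 _ <-| H].
  rewrite (bigD1 a0) //= eqxx mul1r big1 ?addr0 // => a Ha.
  by move: Ha; rewrite -val_eqE => /negbTE ->; rewrite mul0r.
rewrite big1 // => a _.
have -> : (a == c :> nat) = false.
  by apply/negbTE; apply: contra H => /eqP <-; exact: ltn_ord.
by rewrite mul0r.
Qed.

Definition Dm (R : ringType) k : 'M[R]_k :=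
  \matrix_(i, j) ((j == i.+1 :> nat)%:R - (i == j.+1 :> nat)%:R).

Lemma sumD (R : ringType) k (i : 'I_k) (f : 'I_k -> R) :
  \sum_a Dm R k i a * f a = ext1 f (i%:Z + 1) - ext1 f (i%:Z - 1).
Proof.
under eq_bigr => a _ do rewrite mxE mulrBl.
rewrite sumrB sum_delta.
have -> : i%:Z + 1 = Posz i.+1 by lia.
congr (_ - _).
case: i => [[|i] Hi] /=.
  by rewrite big1 // => a _; rewrite mul0r.
rewrite subSS subn0 -[RHS]/(ext1 f (Posz i)).
rewrite -sum_delta; apply: eq_bigr => a _.
by rewrite eqSS eq_sym.
Qed.

Arguments ext1 : simpl never.

Lemma convE (R : comRingType) m n (X : 'M[R]_(m, n)) :
  conv3 (edgeA R) X = Dm R m *m X *m (Dm R n)^T.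
Proof.
apply/matrixP => i j.
have E : forall a, (X *m (Dm R n)^T) a j =
   ext1 (X a) (j%:Z + 1) - ext1 (X a) (j%:Z - 1).
  move=> a; rewrite mxE -sumD; apply: eq_bigr => b _; by rewrite mxE mulrC.
rewrite -mulmxA [RHS]mxE.
rewrite [RHS](eq_bigr (fun a => Dm R m i a *
   (ext1 (X a) (j%:Z + 1) - ext1 (X a) (j%:Z - 1)))); last by move=> a _; rewrite E.
rewrite sumD !ext1B.
rewrite [LHS]mxE !big_ord_recl !big_ord0 !zextE !mxE /=.
have h0 : forall x : int, x - 0 + 1 = x + 1 by move=> x; lia.
have h1 : forall x : int, x - 1 + 1 = x by move=> x; lia.
have h2 : forall x : int, x - 2 + 1 = x - 1 by move=> x; lia.
rewrite !h0 !h1 !h2 !(mul1r, mul0r, mulN1r, add0r, addr0).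
ring.
Qed.

Lemma even_kernel (R : ringType) k (f : 'I_k -> R) : ~~ odd k ->
  (forall j : 'I_k, ext1 f (j%:Z + 1) = ext1 f (j%:Z - 1)) -> forall i, f i = 0.
Proof.
move=> Hk H.
pose w a := ext1 f (Posz a).
have Hout : forall a, (k <= a)%N -> w a = 0 by move=> a; exact: ext1_out.
have H1 : w 1%N = 0.
  case: (ltnP 0 k) => [k0|k0]; last by apply: Hout; lia.
  exact: (H (Ordinal k0)).
have H2 : forall j, (j.+1 < k)%N -> w j.+2 = w j.
  move=> j Hj.
  have E : ext1 f (Posz j.+1 + 1) = ext1 f (Posz j.+1 - 1) := H (Ordinal Hj).
  rewrite (_ : (Posz j.+1 + 1) = Posz j.+2) in E; last by lia.
  rewrite (_ : (Posz j.+1 - 1) = Posz j) in E; last by lia.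
  exact: E.
have Hodd : forall t, w (2*t+1)%N = 0.
  elim => [|t IH]; first by rewrite muln0 add0n.
  case: (ltnP (2*t+2) k) => h.
    rewrite (_ : (2*t.+1+1 = (2*t+1).+2)%N); last by lia.
    rewrite H2 //; lia.
  apply: Hout; lia.
have hk : k = (2 * k./2)%N.
  by have := odd_double_half k; rewrite (negbTE Hk) add0n -muln2 mulnC.
have Hev: forall d, (d <= k./2)%N -> w (2*(k./2 - d))%N = 0.
  elim => [|d IH] hd.
    by rewrite subn0 -hk; apply: Hout.
  rewrite -(H2 (2*(k./2 - d.+1))%N); last by lia.
  rewrite (_ : ((2*(k./2-d.+1)).+2 = 2*(k./2-d))%N); last by lia.
  apply: IH; lia.
move=> i; rewrite -(ext1_in f i) -/(w i).
have := odd_double_half i; have := ltn_ord i; case: (odd i) => /= hl hi.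
  rewrite -muln2 in hi.
  rewrite (_ : (i:nat) = (2*(i./2)+1)%N); [exact: Hodd| lia].
rewrite -muln2 add0n in hi.
rewrite (_ : (i:nat) = (2*(k./2 - (k./2 - i./2)))%N); last by lia.
apply: Hev; lia.
Qed.

Lemma Dm_unit (R : fieldType) k : ~~ odd k -> Dm R k \in unitmx.
Proof.
move=> Hk; rewrite -row_free_unit -kermx_eq0.
apply/eqP/row_matrixP => i; rewrite row0.
set u := row i _.
have Hu : u *m Dm R k = 0 by apply/sub_kermxP; exact: row_sub.
apply/rowP => a; rewrite [RHS]mxE.
apply: (@even_kernel R k (fun a => u 0 a)) Hk _ a => j.
have := congr1 (fun M : 'rV[R]_k => M 0 j) Hu; rewrite !mxE => E.
apply/eqP; rewrite -subr_eq0 -sumD.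
rewrite (eq_bigr (fun a => - (u 0 a * Dm R k a j))); last first.
  by move=> b _; rewrite !mxE mulrC -mulrN opprB.
by rewrite sumrN E oppr0.
Qed.

Lemma odd_kernel (R : ringType) k (c : R) (g : 'I_k -> R) : odd k ->
  (forall a : 'I_k, g a = if odd a then 0 else c) ->
  forall i : 'I_k, ext1 g (i%:Z + 1) = ext1 g (i%:Z - 1).
Proof.
move=> Hk Hg.
have E : forall a : nat, ext1 g (Posz a) = if (a < k)%N then (if odd a then 0 else c) else 0.
  move=> a; rewrite /ext1; case: insubP => [a0 Ha <-|Ha].
    by rewrite Hg ltn_ord.
  by rewrite (negbTE Ha).
move=> [i Hi] /=.
rewrite (_ : (Posz i + 1) = Posz i.+1); last by lia.
case: i Hi => [|i] Hi.
  by rewrite E; case: ifP.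
rewrite (_ : (Posz i.+1 - 1) = Posz i); last by lia.
rewrite !E !oddS negbK (ltnW Hi).
case: (boolP (odd i)) => ho /=.
  by case: ifP.
have -> : (i.+2 < k)%N.
  rewrite ltn_neqAle Hi andbT; apply/eqP => e; move: Hk; rewrite -e !oddS negbK.
  by rewrite (negbTE ho).
by [].
Qed.

Lemma odd_form m : (0 < m)%N -> (exists l : nat, (0 < l)%N /\ m = (2 * l - 1)%N) <-> odd m.
Proof.
move=> hm; split.
  move=> [[|l] [Hl ->]] //.
  rewrite (_ : (2 * l.+1 - 1 = (2 * l).+1)%N); last by lia.
  by rewrite oddS oddM.
move=> ho; exists (m.+1)./2.
have := odd_double_half m.+1; rewrite oddS ho /= add0n -muln2 => e.
split; lia.
Qed.

Theorem corollary7 (R : realType) (m n : nat) (hm : (0 < m)%N) (hn : (0 < n)%N) :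
  (forall B : 'M[R]_(m, n), exists! X : 'M[R]_(m, n), conv3 (edgeA R) X = B)
  <-> (~ (exists l : nat, (0 < l)%N /\ m = (2 * l - 1)%N) /\
       ~ (exists l : nat, (0 < l)%N /\ n = (2 * l - 1)%N)).
Proof.
split.
- move=> H.
  have conv0 : conv3 (edgeA R) (0 : 'M[R]_(m, n)) = 0 by rewrite convE mulmx0 mul0mx.
  have key : forall X0 : 'M[R]_(m,n), conv3 (edgeA R) X0 = 0 -> X0 = 0.
    move=> X0 h0; have [X [_ Hu]] := H 0.
    have e1 := Hu X0 h0; have e2 := Hu 0 conv0.
    by rewrite -e1 e2.
  split => [/(odd_form hm) ho | /(odd_form hn) ho].
  + pose X0 : 'M[R]_(m,n) := \matrix_(i, j) (if odd i then 0 else (j == 0 :> nat)%:R).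
    have : X0 = 0.
      apply: key; rewrite convE.
      have -> : Dm R m *m X0 = 0; last by rewrite mul0mx.
      apply/matrixP => i j; rewrite mxE [RHS]mxE sumD.
      apply/eqP; rewrite subr_eq0; apply/eqP.
      apply: (@odd_kernel R m ((j == 0 :> nat)%:R)) ho _ i => a.
      by rewrite mxE.
    move/matrixP/(_ (Ordinal hm) (Ordinal hn)); rewrite !mxE /=.
    by move/eqP; rewrite oner_eq0.
  + pose X0 : 'M[R]_(m,n) := \matrix_(i, j) (if odd j then 0 else (i == 0 :> nat)%:R).
    have : X0 = 0.
      apply: key; rewrite convE -mulmxA.
      have -> : X0 *m (Dm R n)^T = 0; last by rewrite mulmx0.
      apply/matrixP => i j; rewrite mxE [RHS]mxE.
      rewrite (eq_bigr (fun b => Dm R n j b * X0 i b)); last first.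
        by move=> b _; rewrite [(Dm R n)^T b j]mxE mulrC.
      rewrite sumD.
      apply/eqP; rewrite subr_eq0; apply/eqP.
      apply: (@odd_kernel R n ((i == 0 :> nat)%:R)) ho _ j => a.
      by rewrite mxE.
    move/matrixP/(_ (Ordinal hm) (Ordinal hn)); rewrite !mxE /=.
    by move/eqP; rewrite oner_eq0.
- move=> [Hm' Hn'].
  have um : Dm R m \in unitmx by apply: Dm_unit; apply/negP => /(odd_form hm).
  have un : (Dm R n)^T \in unitmx by rewrite unitmx_tr; apply: Dm_unit; apply/negP => /(odd_form hn).
  move=> B; exists (invmx (Dm R m) *m B *m invmx (Dm R n)^T); split.
    by rewrite convE !mulmxA mulmxV // mul1mx mulmxKV.
  move=> Y HY; by rewrite -HY convE !mulmxA mulVmx // mul1mx mulmxK.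
Qed.
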